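(* Let $0<a,b<1$, let $f\ge3$ be an integer, and let $\overline w_{m,n}$ ($m,n\ge0$, $m\ne n$) be as defined in the context. For $0\le m\le n-2$ put $[\overline w]_{m,n}:=\overline w_{m,n}\overline w_{m+1,n+1}-\overline w_{m,n+1}\overline w_{m+1,n}$. Then (with all indices nonnegative): 1. $[\overline w]_{f-\ell,f+j}=a^2r^2z^4(1-a)(1-b)x_a^{\ell-2}x(a,b)x_b^{j-1}$ for $\ell\ge2$, $j\ge1$; 2. $[\overline w]_{f-\ell,f}=a^2r^2z^4(1-a)(1-b)x_a^{\ell-2}$ for $\ell\ge2$; 3. $[\overline w]_{f-1,f+j}=b^2r^2z^4(1-a)(1-b)x_b^{j-1}$ for $j\ge1$; 4. $[\overline w]_{m,m+\ell}=a^2r^2z^4(1-a)^2x_a^{\ell-2}$ for $\ell\ge2$, $m+\ell\le f-1$; 5. $[\overline w]_{m,m+j}=b^2r^2z^4(1-b)^2x_b^{j-2}$ for $f\le m$, $j\ge2$.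
   Context: Let $r,y,z$ be indeterminates. For $c\in(0,1)$: $\omega_c:=1-(1-c)^2r^2y^2z^2$, $\tau_c:=1+(1-c)^2r^2z^2y(1-y)$, $x_c:=c^2z^2\tau_c^2$, $\beta_c:=1+z^2(c^2-(1-c)^2r^2(y^2+c^2(1-y)^2z^2))$; $w^*_0(c):=(\beta_c-\omega_c)/x_c$, $w^*_1(c):=1$, $w^*_{n+1}(c):=\beta_cw^*_n(c)-x_cw^*_{n-1}(c)$ ($n\ge1$). Also $\omega(a,b):=1-(1-a)(1-b)r^2y^2z^2$, $\tau(a,b):=1+(1-a)(1-b)r^2z^2y(1-y)$, $x(a,b):=b^2z^2\tau(a,b)^2$, $x(b,a):=a^2z^2\tau(a,b)^2$, $\beta(a,b):=\beta_b-(b-a)b^2(1-b)r^2(1-y)^2z^4$, $\beta(b,a):=\beta_a-(a-b)a^2(1-a)r^2(1-y)^2z^4$. Define $\overline w_{m,m+1}=\overline w_{m+1,m}:=1$ for $m\ge0$, and for $n-m\ge2$ (all indices $\ge0$): upward: (U1) $\overline w_{m,m+\ell}:=w^*_\ell(a)$ if $m+\ell\le f$, and $:=w^*_\ell(b)$ if $f\le m$; (U2) $\overline w_{f-\ell,f+1}:=\frac{1-b}{1-a}w^*_{\ell+1}(a)+\frac{b-a}{1-a}w^*_\ell(a)$, $1\le\ell\le f$; (U3) $\overline w_{m,f+2}:=\beta(a,b)\overline w_{m,f+1}-x(a,b)\overline w_{m,f}$, $m\le f-1$; (U4) $\overline w_{m,f+j+1}:=\beta_b\overline w_{m,f+j}-x_b\overline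 w_{m,f+j-1}$, $m\le f-1$, $j\ge2$. Downward: (D1) $\overline w_{m+\ell,m}:=w^*_\ell(a)$ if $m+\ell\le f-1$, and $:=w^*_\ell(b)$ if $f-1\le m$; (D2) $\overline w_{f+j,f-2}:=\frac{1-a}{1-b}w^*_{j+2}(b)+\frac{a-b}{1-b}w^*_{j+1}(b)$, $j\ge0$; (D3) $\overline w_{n,f-3}:=\beta(b,a)\overline w_{n,f-2}-x(b,a)\overline w_{n,f-1}$, $n\ge f$; (D4) $\overline w_{n,f-\ell-2}:=\beta_a\overline w_{n,f-\ell-1}-x_a\overline w_{n,f-\ell}$, $n\ge f$, $\ell\ge2$. (In particular $\overline w_{f-1,f+1}=\omega(a,b)=\overline w_{f,f-2}$.) *)

(* Defs.v *)
From HB Require Import structures.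
From mathcomp Require Import all_boot all_order all_algebra.
Set Implicit Arguments. Unset Strict Implicit. Unset Printing Implicit Defensive.
Import Order.TTheory GRing.Theory Num.Theory.
Local Open Scope ring_scope.

Section WbarDefs.
Variable R : fieldType.
Variables (a b : R) (f : nat) (r y z : R).

Definition omega_c (c : R) : R := 1 - (1 - c)^+2 * r^+2 * y^+2 * z^+2.
Definition tau_c (c : R) : R := 1 + (1 - c)^+2 * r^+2 * z^+2 * y * (1 - y).
Definition x_c (c : R) : R := c^+2 * z^+2 * (tau_c c)^+2.
Definition beta_c (c : R) : R :=
  1 + z^+2 * (c^+2 - (1 - c)^+2 * r^+2 * (y^+2 + c^+2 * (1 - y)^+2 * z^+2)).

Fixpoint wstar (c : R) (n : nat) : R :=
  match n with
  | 0%N => (beta_c c - omega_c c) / x_c c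
  | 1%N => 1
  | (n'.+1 as n1).+1 => beta_c c * wstar c n1 - x_c c * wstar c n'
  end.

Definition omega2 (c d : R) : R := 1 - (1 - c) * (1 - d) * r^+2 * y^+2 * z^+2.
Definition tau2 (c d : R) : R := 1 + (1 - c) * (1 - d) * r^+2 * z^+2 * y * (1 - y).
Definition x_ab : R := b^+2 * z^+2 * (tau2 a b)^+2.
Definition x_ba : R := a^+2 * z^+2 * (tau2 a b)^+2.
Definition beta_ab : R := beta_c b - (b - a) * b^+2 * (1 - b) * r^+2 * (1 - y)^+2 * z^+4.
Definition beta_ba : R := beta_c a - (a - b) * a^+2 * (1 - a) * r^+2 * (1 - y)^+2 * z^+4.

Definition wbar_U1 (m n : nat) : R :=
  if n == m.+1 then 1
  else if (n <= f)%N then wstar a (n - m)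
  else wstar b (n - m).

(* (U2): wbar_{m,f+1} for m <= f-1, with l = f - m *)
Definition wbar_U2 (m : nat) : R :=
  let l := (f - m)%N in
  (1 - b) / (1 - a) * wstar a l.+1 + (b - a) / (1 - a) * wstar a l.

(* useq m k = wbar_{m, f+1+k} for m <= f-1, by (U2), (U3), (U4) *)
Fixpoint useq (m k : nat) : R :=
  match k with
  | 0%N => wbar_U2 m
  | 1%N => beta_ab * wbar_U2 m - x_ab * wbar_U1 m f
  | (k'.+1 as k1).+1 => beta_c b * useq m k1 - x_c b * useq m k'
  end.

Definition wbar_up (m n : nat) : R :=
  if n == m.+1 then 1
  else if (n <= f)%N then wstar a (n - m)
  else if (f <= m)%N then wstar b (n - m)
  else useq m (n - f.+1).

(* (D2): wbar_{f+j, f-2}, j >= 0 *)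
Definition wbar_D2 (N : nat) : R :=
  let j := (N - f)%N in
  (1 - a) / (1 - b) * wstar b j.+2 + (a - b) / (1 - b) * wstar b j.+1.

(* wbar_{N, f-1} for N >= f (from (D1) and the convention) *)
Definition wbar_Nfm1 (N : nat) : R :=
  if N == f then 1 else wstar b (N - f.-1).

(* dseq N k = wbar_{N, f-2-k} for N >= f, by (D2), (D3), (D4) *)
Fixpoint dseq (N k : nat) : R :=
  match k with
  | 0%N => wbar_D2 N
  | 1%N => beta_ba * wbar_D2 N - x_ba * wbar_Nfm1 N
  | (k'.+1 as k1).+1 => beta_c a * dseq N k1 - x_c a * dseq N k'
  end.

Definition wbar_dn (N M : nat) : R :=
  if N == M.+1 then 1
  else if (N <= f.-1)%N then wstar a (N - M)
  else if (f.-1 <= M)%N then wstar b (N - M)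
  else dseq N (f.-2 - M).

(* wbar_{m,n} for m <> n (value 0 on the unused diagonal) *)
Definition wbar (m n : nat) : R :=
  if (m < n)%N then wbar_up m n
  else if (n < m)%N then wbar_dn m n
  else 0.

Definition wbrk (m n : nat) : R :=
  wbar m n * wbar m.+1 n.+1 - wbar m n.+1 * wbar m.+1 n.

End WbarDefs.

(* Main.v *)
Require Import Defs.
From HB Require Import structures.
From mathcomp Require Import all_boot all_order all_algebra.
From mathcomp Require Import ring lra zify.
Import Order.TTheory GRing.Theory Num.Theory.
Local Open Scope ring_scope.

Section S.
Variable R : fieldType.
Variables (a b : R) (f : nat) (r y z : R).

Local Notation ws := (wstar r y z).
Local Notation X c := (x_c r y z c).
Local Notation W := (wbar a b f r y z).
Local Notation U := (useq a b f r y z).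

Lemma wsSS c n : ws c n.+2 = beta_c r y z c * ws c n.+1 - x_c r y z c * ws c n.
Proof. by case: n. Qed.

Lemma ws2 c : X c != 0 -> ws c 2 = omega_c r y z c.
Proof. move=> h; rewrite wsSS /=; field; exact: h. Qed.

Lemma Eq c n : X c != 0 ->
  ws c n.+2 ^+ 2 - ws c n.+3 * ws c n.+1 =
  c^+2 * r^+2 * z^+4 * (1 - c)^+2 * X c ^+ n.
Proof.
move=> h; elim: n => [|n IH].
  rewrite [ws c 3]wsSS ws2 // (_ : ws c 1 = 1) // /omega_c /beta_c /x_c /tau_c; ring.
transitivity (X c * (c^+2 * r^+2 * z^+4 * (1 - c)^+2 * X c ^+ n)); last first.
  by rewrite [X c ^+ n.+1]exprS; ring.
by rewrite -IH !wsSS; ring.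
Qed.

Lemma cas (u v : nat -> R) (be x : R) :
  (forall k, u k.+2 = be * u k.+1 - x * u k) ->
  (forall k, v k.+2 = be * v k.+1 - x * v k) ->
  forall j, u j * v j.+1 - u j.+1 * v j = x ^+ j * (u 0%N * v 1%N - u 1%N * v 0%N).
Proof.
move=> hu hv; elim=> [|j IH]; first by rewrite expr0 mul1r.
by rewrite hu hv exprS -mulrA -IH; ring.
Qed.

Lemma useqSS m k : U m k.+2 = beta_c r y z b * U m k.+1 - x_c r y z b * U m k.
Proof. by case: k. Qed.

Lemma upA m n k : (m < n)%N -> (n <= f)%N -> (n - m = k)%N -> W m n = ws a k.
Proof.
move=> h1 h2 <-; rewrite /wbar h1 /wbar_up h2.
by case: eqP => [->|]; rewrite ?subSnn.
Qed.

Lemma upB m n k : (f <= m)%N -> (m < n)%N -> (n - m = k)%N -> W m n = ws b k.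
Proof.
move=> h0 h1 <-; rewrite /wbar h1 /wbar_up h0.
case: eqP => [->|ne]; first by rewrite subSnn.
by have -> : (n <= f)%N = false by lia.
Qed.

Lemma upM m n k : (m < f)%N -> (f < n)%N -> (n - f.+1 = k)%N -> W m n = U m k.
Proof.
move=> h0 h1 <-; rewrite /wbar /wbar_up.
have -> : (m < n)%N by lia.
have -> : (n == m.+1) = false by apply/eqP; lia.
have -> : (n <= f)%N = false by lia.
by have -> : (f <= m)%N = false by lia.
Qed.

Lemma U1f m : (m < f)%N -> wbar_U1 a b f r y z m f = ws a (f - m).
Proof.
move=> h; rewrite /wbar_U1; case: eqP => [e|_]; first by rewrite e subSnn.
by rewrite leqnn.
Qed.

Lemma U2E m k : (f - m = k)%N ->
  wbar_U2 a b f r y z m = (1 - b) / (1 - a) * ws a k.+1 + (b - a) / (1 - a) * ws a k.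
Proof. by move=> <-. Qed.

Local Notation WB := (wbrk a b f r y z).

Lemma U0 m : U m 0 = wbar_U2 a b f r y z m. Proof. by []. Qed.
Lemma U1 m : U m 1 = beta_ab a b r y z * wbar_U2 a b f r y z m
   - x_ab a b r y z * wbar_U1 a b f r y z m f. Proof. by []. Qed.

Lemma it2 l : 1 - a != 0 -> X a != 0 -> (l.+2 <= f)%N ->
  WB (f - l.+2) f = a^+2 * r^+2 * z^+4 * (1 - a) * (1 - b) * X a ^+ l.
Proof.
move=> ha hxa hl; rewrite /wbrk.
rewrite (upA (f - l.+2) f l.+2); try lia.
rewrite (upM (f - l.+2).+1 f.+1 0); try lia.
rewrite (upM (f - l.+2) f.+1 0); try lia.
rewrite (upA (f - l.+2).+1 f l.+1); try lia.
rewrite !U0 (U2E (f - l.+2).+1 l.+1); last lia.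
rewrite (U2E (f - l.+2) l.+2); last lia.
transitivity ((1 - b) / (1 - a) * (ws a l.+2 ^+ 2 - ws a l.+3 * ws a l.+1)).
  by ring.
rewrite Eq //; field; exact: ha.
Qed.

Lemma it1 l j : 1 - a != 0 -> X a != 0 -> (l.+2 <= f)%N ->
  WB (f - l.+2) (f + j.+1) = a^+2 * r^+2 * z^+4 * (1 - a) * (1 - b) * X a ^+ l
    * x_ab a b r y z * X b ^+ j.
Proof.
move=> ha hxa hl; rewrite /wbrk.
rewrite (upM (f - l.+2) (f + j.+1) j); try lia.
rewrite (upM (f - l.+2).+1 (f + j.+1).+1 j.+1); try lia.
rewrite (upM (f - l.+2) (f + j.+1).+1 j.+1); try lia.
rewrite (upM (f - l.+2).+1 (f + j.+1) j); try lia.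
rewrite (@cas _ _ _ _ (useqSS (f - l.+2)) (useqSS (f - l.+2).+1)).
have := it2 l ha hxa hl; rewrite /wbrk.
rewrite (upA (f - l.+2) f l.+2); try lia.
rewrite (upM (f - l.+2).+1 f.+1 0); try lia.
rewrite (upM (f - l.+2) f.+1 0); try lia.
rewrite (upA (f - l.+2).+1 f l.+1); try lia.
rewrite !U1 (U1f (f - l.+2)); last lia.
rewrite (U1f (f - l.+2).+1); last lia.
have -> : (f - (f - l.+2) = l.+2)%N by lia.
have -> : (f - (f - l.+2).+1 = l.+1)%N by lia.
move=> H.
transitivity (X b ^+ j * (x_ab a b r y z * (ws a l.+2 * U (f - l.+2).+1 0 -
     U (f - l.+2) 0 * ws a l.+1))).
  by rewrite !U0; ring.
rewrite H; ring.
Qed.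

Lemma it3 j : 1 - a != 0 -> X a != 0 -> X b != 0 -> (1 <= f)%N ->
  WB f.-1 (f + j.+1) = b^+2 * r^+2 * z^+4 * (1 - a) * (1 - b) * X b ^+ j.
Proof.
move=> ha hxa hxb hf; rewrite /wbrk.
rewrite (upM f.-1 (f + j.+1) j); try lia.
rewrite (upB f.-1.+1 (f + j.+1).+1 j.+2); try lia.
rewrite (upM f.-1 (f + j.+1).+1 j.+1); try lia.
rewrite (upB f.-1.+1 (f + j.+1) j.+1); try lia.
have C := @cas _ (fun k => ws b k.+1) _ _ (useqSS f.-1) (fun k => wsSS b k.+1) j.
cbv beta in C; rewrite C mulrC; congr (_ * _).
rewrite U1 U0 (U2E f.-1 1); last lia.
have -> : wbar_U1 a b f r y z f.-1 f = 1.
  by rewrite /wbar_U1 prednK ?eqxx.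
rewrite !ws2 // (_ : ws a 1 = 1) // (_ : ws b 1 = 1) //.
rewrite /omega_c /beta_ab /beta_c /x_ab /tau2; field; exact: ha.
Qed.

Lemma it4 m l : X a != 0 -> (m + l.+3 <= f)%N ->
  WB m (m + l.+2) = a^+2 * r^+2 * z^+4 * (1 - a)^+2 * X a ^+ l.
Proof.
move=> hxa hml; rewrite /wbrk.
rewrite (upA m (m + l.+2) l.+2); try lia.
rewrite (upA m.+1 (m + l.+2).+1 l.+2); try lia.
rewrite (upA m (m + l.+2).+1 l.+3); try lia.
rewrite (upA m.+1 (m + l.+2) l.+1); try lia.
by rewrite -expr2 Eq.
Qed.

Lemma it5 m j : X b != 0 -> (f <= m)%N ->
  WB m (m + j.+2) = b^+2 * r^+2 * z^+4 * (1 - b)^+2 * X b ^+ j.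
Proof.
move=> hxb hm; rewrite /wbrk.
rewrite (upB m (m + j.+2) j.+2); try lia.
rewrite (upB m.+1 (m + j.+2).+1 j.+2); try lia.
rewrite (upB m (m + j.+2).+1 j.+3); try lia.
rewrite (upB m.+1 (m + j.+2) j.+1); try lia.
by rewrite -expr2 Eq.
Qed.

End S.

Theorem proposition2 (R : realFieldType) (a b : R) (f : nat) (r y z : R) :
  0 < a < 1 -> 0 < b < 1 -> (3 <= f)%N ->
  x_c r y z a != 0 -> x_c r y z b != 0 ->
  let W := wbrk a b f r y z in
  (* 1 *)
  (forall l j : nat, (2 <= l)%N -> (l <= f)%N -> (1 <= j)%N ->
     W (f - l)%N (f + j)%N =
     a^+2 * r^+2 * z^+4 * (1 - a) * (1 - b) * (x_c r y z a) ^+ (l - 2)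
       * x_ab a b r y z * (x_c r y z b) ^+ (j - 1)) /\
  (* 2 *)
  (forall l : nat, (2 <= l)%N -> (l <= f)%N ->
     W (f - l)%N f =
     a^+2 * r^+2 * z^+4 * (1 - a) * (1 - b) * (x_c r y z a) ^+ (l - 2)) /\
  (* 3 *)
  (forall j : nat, (1 <= j)%N ->
     W f.-1 (f + j)%N =
     b^+2 * r^+2 * z^+4 * (1 - a) * (1 - b) * (x_c r y z b) ^+ (j - 1)) /\
  (* 4 *)
  (forall m l : nat, (2 <= l)%N -> (m + l <= f.-1)%N ->
     W m (m + l)%N =
     a^+2 * r^+2 * z^+4 * (1 - a)^+2 * (x_c r y z a) ^+ (l - 2)) /\
  (* 5 *)
  (forall m j : nat, (f <= m)%N -> (2 <= j)%N ->
     W m (m + j)%N =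
     b^+2 * r^+2 * z^+4 * (1 - b)^+2 * (x_c r y z b) ^+ (j - 2)).
Proof.
move=> /andP[a0 a1] /andP[b0 b1] hf hxa hxb W.
have ha : 1 - a != 0 by rewrite subr_eq0 eq_sym lt_eqF.
have hb : 1 - b != 0 by rewrite subr_eq0 eq_sym lt_eqF.
split; last split; last split; last split.
- move=> [|[|l]] [|j] // _ hl _; rewrite !subSS !subn0.
  exact: it1.
- move=> [|[|l]] // _ hl; rewrite !subSS !subn0; exact: it2.
- move=> [|j] // _; rewrite subSS subn0; apply: it3 => //; lia.
- move=> m [|[|l]] // _ hml; rewrite !subSS !subn0; apply: it4 => //; lia.
- move=> m [|[|j]] // hm _; rewrite !subSS !subn0; exact: it5.
Qed.
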